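(* Let $\mathcal{T}_{5,1}$ be the set of $s\in\mathcal{A}^*$ with $|s|\ne\mathsf{rmin}(s)+1$, $\mathrm{sebr}(s)\ne0$, $\mathrm{sebr}(s)>\mathrm{Rmin}(s)_{\mathsf{rpos}(s)+1}$ and $\mathrm{Prm}(s)_{\mathsf{rpos}(s)+1}=\mathrm{Prm}(s)_{\mathsf{rpos}(s)}+1$. For every $n$ there is a bijection $f_{5,1}$ from $\mathcal{T}_{5,1}\cap\mathcal{A}_n$ onto the set of $s\in\mathcal{A}_n$ such that $\mathsf{rpos}(s)\ne0$, the rightmost occurrence of $\mathrm{Rmin}(s)_{\mathsf{rpos}(s)-1}$ is adjacent to the second rightmost occurrence of $\mathrm{Rmin}(s)_{\mathsf{rpos}(s)}$, and the two rightmost occurrences of $\mathrm{Rmin}(s)_{\mathsf{rpos}(s)}$ are not adjacent and have no $\mathcal{M}$asc between them. Moreover for all $s$: $\mathsf{asc},\mathsf{rep},\mathsf{max},\mathsf{ealm},\mathsf{rmin}$ take equal values on $s$ and $f_{5,1}(s)$, $\mathsf{rpos}(s)=\mathsf{rpos}(f_{5,1}(s))-1$, and $\mathsf{zero}(s)=\mathsf{zero}(f_{5,1}(s))+\chi(\mathsf{rpos}(s)=0)$.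
   Context: For a sequence $s$, $\mathsf{asc}(s)=|\{i:s_i<s_{i+1}\}|$. An ascent sequence is a sequence $s=(s_1,\dots,s_n)$ of non-negative integers with $s_1=0$, $s_i\le\mathsf{asc}(s_1,\dots,s_{i-1})+1$ for $i\ge2$; $\mathcal{A}_n$ is the set of those of length $n$, $|s|$ the length; $\mathcal{A}^*$ is the set of all ascent sequences except those of the form $(0,1,\dots,|s|-1)$. $\mathsf{rep}(s)=|s|-|\{s_i\}|$; $\mathsf{zero}(s)=|\{i:s_i=0\}|$; $\mathsf{max}(s)=|\{i:s_i=i-1\}|$; $\mathsf{ealm}(s)=s_{\mathsf{max}(s)+1}$ if $\mathsf{max}(s)\ne|s|$, else $0$. A right-to-left minimum is an entry $s_i$ with $s_i<s_j$ for all $j>i$; $\mathsf{rmin}(s)$ is their number; they are indexed $0,\dots,\mathsf{rmin}(s)-1$ from left to right, with values $\mathrm{Rmin}(s)_m$ and positions $\mathrm{Prm}(s)_m$. $\mathsf{rpos}(s)$: $0$ if $\mathsf{rmin}(s)=|s|$; otherwise the maximal $m$ such that the value $\mathrm{Rmin}(s)_m$ occurs at least twice after position $\mathrm{Prm}(s)_{m-1}$ (for $m=0$: at least twice in $s$), and $0$ if none. $\mathrm{sebr}(s)$ is the smallest entry strictly between the two rightmost occurrences of $\mathrm{Rmin}(s)_{\mathsf{rpos}(s)}$, and $0$ if they are adjacent; when $\mathsf{rpos}(s)=\mathsf{rmin}(s)-1$ one regards $\mathrm{sebr}(s)<\mathrm{Rmin}(s)_{\mathsf{rpos}(s)+1}$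 as true. An entry $s_i$ is an $\mathcal{M}$asc if $s_i=\mathsf{asc}(s_1,\dots,s_{i-1})+1$. $\chi(P)=1$ if $P$ holds, else $0$. *)

(* Defs.v *)
From mathcomp Require Import all_boot.
Set Implicit Arguments. Unset Strict Implicit. Unset Printing Implicit Defensive.

(* Sequences are seq nat; positions are 0-based internally
   (position i here = position i+1 in the paper). *)

Fixpoint asc (s : seq nat) : nat :=
  match s with
  | x :: ((y :: _) as t) => (x < y) + asc t
  | _ => 0
  end.

Definition is_ascent (s : seq nat) : bool :=
  [&& s != [::], nth 0 s 0 == 0 &
      all (fun i => nth 0 s i <= (asc (take i s)).+1) (iota 1 (size s).-1)].

Definition in_A (n : nat) (s : seq nat) : bool := is_ascent s && (size s == n).

Definition in_Astar (s : seq nat) : bool :=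
  is_ascent s && (s != iota 0 (size s)).

Definition rep (s : seq nat) : nat := size s - size (undup s).
Definition zero (s : seq nat) : nat := count_mem 0 s.
Definition maxst (s : seq nat) : nat :=
  count (fun i => nth 0 s i == i) (iota 0 (size s)).
Definition ealm (s : seq nat) : nat :=
  if maxst s != size s then nth 0 s (maxst s) else 0.

Definition rminpos (s : seq nat) : seq nat :=
  filter (fun i => all (fun j => nth 0 s i < nth 0 s j) (iota i.+1 (size s - i.+1)))
         (iota 0 (size s)).
Definition rmin (s : seq nat) : nat := size (rminpos s).
Definition Prm (s : seq nat) (m : nat) : nat := nth 0 (rminpos s) m.
Definition Rmin (s : seq nat) (m : nat) : nat := nth 0 s (Prm s m).

Definition occ (s : seq nat) (v : nat) : seq nat :=
  filter (fun i => nth 0 s i == v) (iota 0 (size s)).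
Definition rocc1 (s : seq nat) (v : nat) : nat := nth 0 (rev (occ s v)) 0.
Definition rocc2 (s : seq nat) (v : nat) : nat := nth 0 (rev (occ s v)) 1.

Definition rpos_cond (s : seq nat) (m : nat) : bool :=
  1 < count (fun i => (m == 0) || (Prm s (m.-1) < i)) (occ s (Rmin s m)).

Definition rpos (s : seq nat) : nat :=
  if rmin s == size s then 0
  else last 0 (filter (rpos_cond s) (iota 0 (rmin s))).

(* smallest entry strictly between the two rightmost occurrences of
   Rmin_{rpos}; 0 if they are adjacent (or if there are fewer than two) *)
Definition sebr (s : seq nat) : nat :=
  let v := Rmin s (rpos s) in
  if size (occ s v) < 2 then 0 else
  let a := rocc2 s v in let b := rocc1 s v in
  match [seq nth 0 s i | i <- iota a.+1 (b - a.+1)] with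
  | x :: t => foldr minn x t
  | [::] => 0
  end.

Definition adjacent (i j : nat) : bool := (i.+1 == j) || (j.+1 == i).

Definition masc (s : seq nat) (i : nat) : bool :=
  nth 0 s i == (asc (take i s)).+1.

(* T_{5,1}.  "sebr(s) > Rmin_{rpos+1}" is false when rpos = rmin - 1
   (convention: then sebr < Rmin_{rpos+1} is regarded as true). *)
Definition in_T51 (s : seq nat) : bool :=
  [&& in_Astar s, size s != (rmin s).+1, sebr s != 0,
      ((rpos s).+1 < rmin s) && (Rmin s (rpos s).+1 < sebr s) &
      Prm s (rpos s).+1 == (Prm s (rpos s)).+1].

Definition in_target (n : nat) (s : seq nat) : bool :=
  let v := Rmin s (rpos s) in
  [&& in_A n s, rpos s != 0,
      adjacent (Prm s (rpos s).-1) (rocc2 s v),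
      ~~ adjacent (rocc2 s v) (rocc1 s v) &
      ~~ has (masc s) (iota (rocc2 s v).+1 (rocc1 s v - (rocc2 s v).+1))].

(* Main.v *)
Require Import Defs.
From mathcomp Require Import all_boot zify.
Set Implicit Arguments. Unset Strict Implicit. Unset Printing Implicit Defensive.


Lemma asc_cons2 x y r : asc (x :: y :: r) = (x < y) + asc (y :: r).
Proof. by []. Qed.

Lemma asc_cat l A B : asc (l :: A ++ B) = asc (l :: A) + asc (last l A :: B).
Proof.
elim: A l => [|y A IH] l; first by [].
by rewrite cat_cons !asc_cons2 IH addnA.
Qed.

Lemma asc_le y : asc y <= (size y).-1.
Proof.
elim: y => [|a [|b r] IH] //.
rewrite asc_cons2; move: IH => /=; case: (a < b); lia.
Qed.

Lemma asc_eq_sorted y : asc y = (size y).-1 -> sorted ltn y.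
Proof.
elim: y => [|a [|b r] IH] //.
have hle := asc_le (b :: r).
rewrite asc_cons2 => h.
have hab : a < b by move: h hle; case: (a < b) => //=; lia.
rewrite /sorted /= hab /=; apply: IH; move: h hle; rewrite hab /=; lia.
Qed.

Lemma sorted_ge y : sorted ltn y -> forall j, j < size y -> nth 0 y 0 + j <= nth 0 y j.
Proof.
elim: y => [|a r IH] //= hs [|j] //=; first by rewrite addn0.
case: r IH hs => [|b r] IH //= /andP[hab hp] hj.
have := IH hp j hj => /=. lia.
Qed.

Lemma asc0 X : nth 0 X 0 = 0 -> asc (0 :: X) = asc X.
Proof. by case: X => [|y X] //= ->. Qed.

Lemma iotaSm m n : iota m.+1 n = map succn (iota m n).
Proof. by elim: n m => //= n IH m; rewrite IH. Qed.

Lemma iota_add m n : iota m n = map (addn m) (iota 0 n).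
Proof. by rewrite -iotaDl addn0. Qed.

Fixpoint okf (a l : nat) (x : seq nat) : bool :=
  if x is y :: r then (y <= a.+1) && okf (a + (l < y)) y r else true.
Fixpoint nmf (a l : nat) (x : seq nat) : bool :=
  if x is y :: r then (y != a.+1) && nmf (a + (l < y)) y r else true.

Lemma okf_cat a l A B :
  okf a l (A ++ B) = okf a l A && okf (a + asc (l :: A)) (last l A) B.
Proof.
elim: A a l => [|y A IH] a l /=; first by rewrite addn0.
by rewrite IH addnA andbA.
Qed.

Lemma okfE a l x :
  okf a l x = all (fun i => nth 0 x i <= a + asc (l :: take i x) + 1) (iota 0 (size x)).
Proof.
elim: x a l => [|y x IH] a l //=.
rewrite addn0 addn1 IH iotaSm all_map; congr andb.
by apply: eq_all => i /=; rewrite addnA.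
Qed.

Lemma nmfE a l x :
  nmf a l x = all (fun i => nth 0 x i != a + asc (l :: take i x) + 1) (iota 0 (size x)).
Proof.
elim: x a l => [|y x IH] a l //=.
rewrite addn0 addn1 IH iotaSm all_map; congr andb.
by apply: eq_all => i /=; rewrite addnA.
Qed.

Lemma okf_mono a a' l x : a <= a' -> okf a l x -> okf a' l x.
Proof.
elim: x a a' l => [|y x IH] a a' l //= h /andP[h1 h2].
apply/andP; split; first lia.
by apply: IH h2; lia.
Qed.

Lemma okf_nmf a l x : okf a l x -> nmf a.+1 l x.
Proof.
elim: x a l => [|y x IH] a l //= /andP[h1 h2].
apply/andP; split; first lia.
by rewrite addSn; apply: IH.
Qed.

Lemma okf_shift a l x : okf a.+1 l x -> nmf a.+1 l x -> okf a l x.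
Proof.
elim: x a l => [|y x IH] a l //= /andP[h1 h2] /andP[h3 h4].
apply/andP; split; first lia.
by apply: IH; rewrite -addSn.
Qed.

Lemma ascE x : is_ascent x = [&& x != [::], nth 0 x 0 == 0 & okf 0 0 x].
Proof.
case: x => [|y x] //=.
rewrite /is_ascent /=.
case: eqP => [->|] //=.
rewrite okfE iotaSm all_map; apply: eq_all => i /=.
by rewrite add0n addn1.
Qed.


Lemma okf_cons a l y r : okf a l (y :: r) = (y <= a.+1) && okf (a + (l < y)) y r.
Proof. by []. Qed.

Definition idx (Q : nat -> seq nat -> bool) (x : seq nat) :=
  filter (fun i => Q (nth 0 x i) (drop i.+1 x)) (iota 0 (size x)).

Lemma nth_catr (A B : seq nat) j : nth 0 (A ++ B) (size A + j) = nth 0 B j.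
Proof. by rewrite nth_cat ltnNge leq_addr /= addKn. Qed.
Lemma drop_catr (A B : seq nat) j : drop (size A + j) (A ++ B) = drop j B.
Proof. by rewrite drop_cat ltnNge leq_addr /= addKn. Qed.
Lemma take_catr (A B : seq nat) j : take (size A + j) (A ++ B) = A ++ take j B.
Proof.
rewrite take_cat ltnNge leq_addr /= addKn //.
Qed.
Lemma nth_catl (A B : seq nat) j : j < size A -> nth 0 (A ++ B) j = nth 0 A j.
Proof. by move=> h; rewrite nth_cat h. Qed.

Lemma filter_none (a : pred nat) s : (forall i, i \in s -> ~~ a i) -> filter a s = [::].
Proof.
elim: s => //= x s IH h; rewrite (negbTE (h x (mem_head _ _))) IH // => i hi.
by apply: h; rewrite inE hi orbT.
Qed.

Lemma idx_cat Q A B : idx Q (A ++ B) =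
  filter (fun i => Q (nth 0 A i) (drop i.+1 A ++ B)) (iota 0 (size A))
  ++ map (addn (size A)) (idx Q B).
Proof.
rewrite /idx size_cat iotaD filter_cat add0n; congr (_ ++ _).
  apply: eq_in_filter => i; rewrite mem_iota add0n => /andP[_ lti].
  rewrite nth_cat lti drop_cat; case: ltnP => h //.
  have -> : i.+1 = size A by lia.
  by rewrite subnn drop0 drop_size.
rewrite (iota_add (size A)) filter_map; congr map.
apply: eq_filter => j /=.
by rewrite nth_catr -addnS drop_catr.
Qed.

Lemma idx_cons Q a x : idx Q (a :: x) = (if Q a x then [:: 0] else [::]) ++ map succn (idx Q x).
Proof.
by rewrite -cat1s idx_cat /=.
Qed.

Lemma idx_nil Q x : (forall i, i < size x -> ~~ Q (nth 0 x i) (drop i.+1 x)) -> idx Q x = [::].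
Proof. by move=> h; apply: filter_none => i; rewrite mem_iota => /andP[_]; apply: h. Qed.

Definition Qr (y : nat) (r : seq nat) := all (fun z => y < z) r.
Definition Qo (c : nat) (y : nat) (r : seq nat) := y == c.

Lemma rminposE x : rminpos x = idx Qr x.
Proof.
rewrite /rminpos /idx; apply: eq_in_filter => i; rewrite mem_iota => /andP[_ lt].
rewrite /Qr.
have -> : drop i.+1 x = map (nth 0 x) (iota i.+1 (size x - i.+1)).
  by rewrite map_nth_iota // take_oversize // size_drop.
by rewrite all_map.
Qed.

Lemma occE x c : occ x c = idx (Qo c) x.
Proof. by []. Qed.

Lemma occ_nil c x : all (fun z => c < z) x -> idx (Qo c) x = [::].
Proof.
move=> /allP h; apply: idx_nil => i hi; rewrite /Qo.
by move: (h _ (mem_nth 0 hi)); rewrite ltn_neqAle eq_sym => /andP[].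
Qed.

Lemma uniq_rminpos x : uniq (rminpos x).
Proof. by rewrite /rminpos filter_uniq // iota_uniq. Qed.

Lemma sorted_rminpos x : sorted ltn (rminpos x).
Proof. by rewrite /rminpos sorted_filter //; [exact: ltn_trans | exact: iota_ltn_sorted]. Qed.

Lemma Prm_lt x i j : i < j -> j < rmin x -> Prm x i < Prm x j.
Proof.
move=> hij hj; rewrite /Prm.
apply: (sorted_ltn_nth ltn_trans 0 (sorted_rminpos x)) => //; rewrite inE /rmin in hj *.
  by apply: ltn_trans hj.
Qed.

Lemma Prm_inj x i j : i < rmin x -> j < rmin x -> Prm x i = Prm x j -> i = j.
Proof.
move=> hi hj e; case: (ltngtP i j) => // h.
- by have := Prm_lt h hj; rewrite e ltnn.
- by have := Prm_lt h hi; rewrite e ltnn.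
Qed.

Lemma Prm_mem x m : m < rmin x -> Prm x m \in rminpos x.
Proof. by move=> h; rewrite /Prm mem_nth. Qed.

Lemma rminpos_mem x q : (q \in rminpos x) = (q < size x) && Qr (nth 0 x q) (drop q.+1 x).
Proof. by rewrite rminposE /idx mem_filter mem_iota add0n andbC. Qed.

Lemma Prm_rmin x m : m < rmin x ->
  Prm x m < size x /\ all (fun z => Rmin x m < z) (drop (Prm x m).+1 x).
Proof. by move=> /Prm_mem; rewrite rminpos_mem => /andP[]. Qed.

Lemma last_filter_ge (a : pred nat) n m : m < n -> a m -> m <= last 0 (filter a (iota 0 n)).
Proof.
move=> hmn ham.
have -> : n = m + (n - m.+1).+1 by lia.
rewrite iotaD filter_cat add0n /= ham last_cat /=.
set F := filter _ _.
have hF : forall z, z \in F -> m <= z by move=> z; rewrite mem_filter mem_iota => /and3P[_ h _]; lia.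
have := mem_last m F; rewrite inE => /orP[/eqP -> //|]; exact: hF.
Qed.

Lemma last_filter_eq (a : pred nat) n r : r < n -> a r ->
  (forall m, r < m < n -> ~~ a m) -> last 0 (filter a (iota 0 n)) = r.
Proof.
move=> hrn har h.
have -> : n = (r + 1) + (n - r.+1) by lia.
rewrite iotaD filter_cat add0n (@filter_none a (iota (r + 1) _)); last first.
  by move=> i; rewrite mem_iota => /andP[h1 h2]; apply: h; lia.
by rewrite cats0 iotaD filter_cat add0n /= har last_cat.
Qed.

Lemma last_filter_mem (a : pred nat) n : filter a (iota 0 n) != [::] ->
  a (last 0 (filter a (iota 0 n))) && (last 0 (filter a (iota 0 n)) < n).
Proof.
case E: (filter a (iota 0 n)) => [|y F] // _.
have := mem_last y F; rewrite -E mem_filter mem_iota /= add0n E /=.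
by case/andP => -> ->.
Qed.

Lemma rpos_last x r : rmin x != size x -> rpos x = r ->
  forall m, r < m < rmin x -> ~~ rpos_cond x m.
Proof.
rewrite /rpos => /negbTE ->.
move=> e m /andP[h1 h2]; apply/negP => hc.
have := last_filter_ge h2 hc; rewrite e; lia.
Qed.

Lemma rpos_eq x r : rmin x != size x -> r < rmin x -> rpos_cond x r ->
  (forall m, r < m < rmin x -> ~~ rpos_cond x m) -> rpos x = r.
Proof.
rewrite /rpos => /negbTE -> h1 h2 h3.
exact: last_filter_eq.
Qed.

Lemma rpos_nz x : rpos x != 0 ->
  [/\ rmin x != size x, rpos x < rmin x & rpos_cond x (rpos x)].
Proof.
rewrite /rpos; case: (rmin x =P size x) => // /eqP hne.
case E: (filter (rpos_cond x) (iota 0 (rmin x))) => [|y F] //= _.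
have := last_filter_mem (a := rpos_cond x) (n := rmin x); rewrite E /= => /(_ isT).
case/andP => h1 h2; split => //; exact/eqP.
Qed.


Lemma EXR x i : i < size x ->
  exists j, [/\ i <= j, j \in rminpos x & nth 0 x j <= nth 0 x i].
Proof.
move: {2}(size x - i) (leqnn (size x - i)) => k.
elim: k i => [|k IH] i hk hi; first lia.
case h: (Qr (nth 0 x i) (drop i.+1 x)).
  by exists i; split => //; rewrite rminpos_mem hi h.
move/negbT: h => /allPn [z hz hle].
have hj : index z (drop i.+1 x) < size (drop i.+1 x) by rewrite index_mem.
have ez := nth_index 0 hz; rewrite nth_drop in ez.
set j' := index z (drop i.+1 x) in hj ez.
rewrite size_drop in hj.
have [j [h1 h2 h3]] := IH (i.+1 + j') ltac:(lia) ltac:(lia).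
exists j; split => //; first lia.
rewrite ez in h3; lia.
Qed.

Lemma occ_rmin x q : q < size x -> all (fun z => nth 0 x q < z) (drop q.+1 x) ->
  occ x (nth 0 x q) = rcons (filter (fun i => nth 0 x i == nth 0 x q) (iota 0 q)) q.
Proof.
move=> hq /(all_nthP 0) hall.
rewrite /occ.
have -> : size x = q + (size x - q.+1).+1 by lia.
rewrite iotaD filter_cat add0n /= eqxx -cats1; congr (_ ++ _); congr (_ :: _).
apply: filter_none => i; rewrite mem_iota => /andP[h1 h2].
have := hall (i - q.+1); rewrite size_drop nth_drop.
have -> : q.+1 + (i - q.+1) = i by lia.
move=> /(_ ltac:(lia)); rewrite ltn_neqAle eq_sym => /andP[]. done.
Qed.

Lemma foldr_minn_gt u w W : (u < foldr minn w W) = all (fun z => u < z) (w :: W).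
Proof.
elim: W => [|y W IH] /=; first by rewrite andbT.
rewrite leq_min IH /=. by case: (u < y); case: (u < w); case: (all _ W).
Qed.

Lemma asc_ok x i : is_ascent x -> i < size x -> nth 0 x i <= asc (take i x) + 1.
Proof.
case/and3P => hne /eqP h0 /allP hall hi.
case: i hi => [|i] hi; first by rewrite h0.
have := hall i.+1; rewrite mem_iota; move=> /(_ ltac:(lia)); lia.
Qed.

Lemma asc_le_i x i : is_ascent x -> nth 0 x i <= i.
Proof.
move=> ha; case: (ltnP i (size x)) => hi; last by rewrite nth_default.
have := asc_ok ha hi; have := asc_le (take i x); rewrite size_take hi.
case: i hi => [|i] hi; last lia.
by case/and3P: ha => _ /eqP ->.
Qed.

Lemma run x i j : is_ascent x -> nth 0 x i = i -> j <= i -> nth 0 x j = j.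
Proof.
move=> ha hi hji.
case: (ltnP i (size x)) => hs; last first.
  move: hi; rewrite nth_default // => ei; have -> : j = 0 by lia.
  by case/and3P: ha => _ /eqP ->.
case: (ltngtP j i) hji => // hlt _; last by rewrite hlt.
have h1 := asc_ok ha hs; have h2 := asc_le (take i x); rewrite size_take hs in h2.
have hs2 : sorted ltn (take i x) by apply: asc_eq_sorted; rewrite size_take hs; lia.
have := sorted_ge hs2 (j := j); rewrite size_take hs => /(_ hlt).
rewrite (nth_take _ hlt) (nth_take _ (leq_ltn_trans (leq0n j) hlt)).
case/and3P: ha (ha) => _ /eqP -> _ ha'.
have := asc_le_i j ha'; lia.
Qed.


Definition Lk (P W' R : seq nat) (v u w : nat) :=
  filter (fun i => Qr (nth 0 P i) (drop i.+1 P ++ v :: w :: W' ++ v :: u :: R)) (iota 0 (size P)).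

Lemma nth_catr0 (A B : seq nat) : nth 0 (A ++ B) (size A) = nth 0 B 0.
Proof. by have := nth_catr A B 0; rewrite addn0. Qed.
Lemma nth_catr1 (A B : seq nat) : nth 0 (A ++ B) (size A).+1 = nth 0 B 1.
Proof. by have := nth_catr A B 1; rewrite addn1. Qed.

Lemma cnt_cat Q A B c : size A <= c.+1 ->
  count (fun i => c < i) (idx Q (A ++ B)) = count (fun i => c < i) (map (addn (size A)) (idx Q B)).
Proof.
move=> h; rewrite idx_cat count_cat.
rewrite (@eq_in_count _ _ pred0) ?count_pred0 // => i.
rewrite mem_filter mem_iota => /and3P[_ _ lt] /=; apply/negbTE; rewrite -leqNgt; lia.
Qed.

Definition f51 (s : seq nat) : seq nat :=
  let r := rpos s in let q := Prm s r in let v := nth 0 s q in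
  let a := rocc2 s v in let u := nth 0 s q.+1 in
  take a s ++ v :: u :: take (q - a.+1) (drop a.+1 s) ++ u :: drop q.+2 s.

Definition g51 (t : seq nat) : seq nat :=
  let r := rpos t in let b := Prm t r in let a := Prm t r.-1 in
  let v := nth 0 t a in let u := nth 0 t b in
  take a t ++ v :: take (b - a.+2) (drop a.+2 t) ++ v :: u :: drop b.+1 t.

Lemma maxst_cut x q : q <= size x -> (forall i, q <= i -> nth 0 x i != i) ->
  maxst x = count (fun i => nth 0 x i == i) (iota 0 q).
Proof.
move=> hq h; rewrite /maxst (_ : size x = q + (size x - q)); last lia.
rewrite iotaD count_cat add0n (@eq_in_count _ _ pred0 (iota q _)) ?count_pred0 ?addn0 //.
by move=> i; rewrite mem_iota => /andP[h1 _]; apply/negbTE/h.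
Qed.

Section Key.
Variables (P W' R : seq nat) (v u w : nat).
Hypotheses (Hvu : v < u) (Huw : u < w) (HW : all (fun z => u < z) W') (HR : all (fun z => u < z) R).

Let s := P ++ v :: w :: W' ++ v :: u :: R.
Let t := P ++ v :: u :: w :: W' ++ u :: R.
Let p := size P.
Let m := size W'.
Let L := Lk P W' R v u w.
Let X := map (addn (p + m + 4)) (rminpos R).

Lemma allWu : all (fun z => u < z) (w :: W').
Proof. by rewrite /= Huw HW. Qed.

Lemma nthW i : i < (size W').+1 -> u < nth 0 (w :: W') i.
Proof. by move=> hi; apply: (all_nthP 0 allWu). Qed.

Lemma lastW : u < last w W'.
Proof. by have := mem_last w W'; move: allWu => /allP h /h. Qed.

Lemma allRv : all (fun z => v < z) R.
Proof. by apply: sub_all HR => z /= h; apply: ltn_trans h. Qed.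

Lemma tail_all (f : pred nat) : all f (v :: w :: W' ++ v :: u :: R) = all f (v :: u :: w :: W' ++ u :: R).
Proof.
rewrite /= !all_cat /=.
by case: (f v); case: (f u); case: (f w); case: (all f W'); case: (all f R).
Qed.

Lemma Qr_false c y Z1 Z2 : c <= y -> Qr y (Z1 ++ c :: Z2) = false.
Proof. by move=> h; rewrite /Qr all_cat /= ltnNge h /= andbF. Qed.

Lemma idxW (Q : nat -> seq nat -> bool) Z :
  (forall i, i < (size W').+1 -> ~~ Q (nth 0 (w :: W') i) (drop i.+1 (w :: W') ++ Z)) ->
  idx Q (w :: W' ++ Z) = map (addn (size W').+1) (idx Q Z).
Proof.
move=> h; rewrite -cat_cons idx_cat filter_none //.
by move=> i; rewrite mem_iota => /andP[_ hi]; apply: h; move: hi => /=; lia.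
Qed.

Lemma rmp_s : rminpos s = L ++ [:: p + m + 2, p + m + 3 & X].
Proof.
rewrite rminposE idx_cat; congr (_ ++ _).
rewrite idx_cons (@Qr_false _ _ (w :: W')) //.
rewrite idxW; last first.
  move=> i hi; rewrite Qr_false //; apply: ltnW; exact: ltn_trans Hvu (nthW hi).
have qv : Qr v (u :: R) by rewrite /Qr /= Hvu allRv.
have qu : Qr u R by exact: HR.
rewrite !idx_cons qv qu /= /X rminposE /p /m.
rewrite -!map_comp; congr [:: _, _ & _]; try lia.
by apply: eq_map => j /=; lia.
Qed.

Lemma L_t : L = filter (fun i => Qr (nth 0 P i) (drop i.+1 P ++ v :: u :: w :: W' ++ u :: R)) (iota 0 p).
Proof. by apply: eq_filter => i; rewrite /Qr !all_cat tail_all. Qed.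

Lemma rmp_t : rminpos t = L ++ [:: p, p + m + 3 & X].
Proof.
rewrite rminposE idx_cat L_t; congr (_ ++ _).
have qv : Qr v (u :: w :: W' ++ u :: R).
  by rewrite /Qr /= all_cat /= Hvu (ltn_trans Hvu Huw) allRv (sub_all _ HW) // => z /= h; apply: ltn_trans h.
rewrite idx_cons qv idx_cons (@Qr_false _ _ (w :: W')) // idxW; last first.
  move=> i hi; rewrite Qr_false //; apply: ltnW; exact: nthW hi.
have qu : Qr u R by exact: HR.
rewrite idx_cons qu /= /X rminposE /p /m.
rewrite -!map_comp; congr [:: _, _ & _]; try lia.
by apply: eq_map => j /=; lia.
Qed.
Lemma occ_s_v : occ s v = filter (fun i => nth 0 P i == v) (iota 0 p) ++ [:: p; p + m + 2].
Proof.
rewrite occE idx_cat; congr (_ ++ _).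
have hv : v != u by rewrite ltn_eqF.
rewrite idx_cons {1}/Qo eqxx idxW; last first.
  by move=> i hi; rewrite /Qo gtn_eqF // (ltn_trans Hvu (nthW hi)).
rewrite idx_cons {1}/Qo eqxx idx_cons {1}/Qo eq_sym (negbTE hv) occ_nil ?allRv //=.
by rewrite /p /m; congr [:: _ ; _]; lia.
Qed.

Lemma occ_t_u : occ t u = filter (fun i => nth 0 P i == u) (iota 0 p) ++ [:: p.+1; p + m + 3].
Proof.
rewrite occE idx_cat; congr (_ ++ _).
have hv : v != u by rewrite ltn_eqF.
rewrite idx_cons {1}/Qo (negbTE hv) idx_cons {1}/Qo eqxx idxW; last first.
  by move=> i hi; rewrite /Qo gtn_eqF // (nthW hi).
rewrite idx_cons {1}/Qo eqxx occ_nil //=.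
by rewrite /p /m; congr [:: _ ; _]; lia.
Qed.

Lemma occ_s_u : occ s u = filter (fun i => nth 0 P i == u) (iota 0 p) ++ [:: p + m + 3].
Proof.
rewrite occE idx_cat; congr (_ ++ _).
have hv : v != u by rewrite ltn_eqF.
rewrite idx_cons {1}/Qo (negbTE hv) idxW; last first.
  by move=> i hi; rewrite /Qo gtn_eqF // (nthW hi).
rewrite idx_cons {1}/Qo (negbTE hv) idx_cons {1}/Qo eqxx occ_nil //=.
by rewrite /p /m; congr [:: _]; lia.
Qed.

Let S1 := P ++ v :: w :: W' ++ [:: v; u].
Let T1 := P ++ v :: u :: w :: W' ++ [:: u].
Lemma s_eq : s = S1 ++ R. Proof. by rewrite /s /S1 -catA /= -catA. Qed.
Lemma t_eq : t = T1 ++ R. Proof. by rewrite /t /T1 -catA /= -catA. Qed.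
Lemma size_S1 : size S1 = p + m + 4.
Proof. rewrite /S1 size_cat /= size_cat /= /p /m; lia. Qed.
Lemma size_T1 : size T1 = p + m + 4.
Proof. rewrite /T1 size_cat /= size_cat /= /p /m; lia. Qed.
Lemma size_s : size s = p + m + 4 + size R. Proof. by rewrite s_eq size_cat size_S1. Qed.
Lemma size_t : size t = p + m + 4 + size R. Proof. by rewrite t_eq size_cat size_T1. Qed.

Lemma nth_lt_p i : i < p -> nth 0 s i = nth 0 t i.
Proof. by move=> h; rewrite /s /t !nth_catl. Qed.
Lemma nth_s_p : nth 0 s p = v.
Proof. by rewrite /s /p -[size P]addn0 nth_catr. Qed.
Lemma nth_t_p : nth 0 t p = v.
Proof. by rewrite /t /p -[size P]addn0 nth_catr. Qed.
Lemma nth_t_p1 : nth 0 t p.+1 = u.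
Proof. by rewrite /t /p -addn1 nth_catr. Qed.
Lemma nth_s_v2 : nth 0 s (p + m + 2) = v.
Proof.
rewrite /s (_ : p + m + 2 = size P + (size W' + 0).+2); last by rewrite /p /m; lia.
by rewrite nth_catr /= nth_catr.
Qed.
Lemma nth_s_u : nth 0 s (p + m + 3) = u.
Proof.
rewrite /s (_ : p + m + 3 = size P + (size W' + 1).+2); last by rewrite /p /m; lia.
by rewrite nth_catr /= nth_catr.
Qed.
Lemma nth_t_u : nth 0 t (p + m + 3) = u.
Proof.
rewrite /t (_ : p + m + 3 = size P + (size W' + 0).+3); last by rewrite /p /m; lia.
by rewrite nth_catr /= nth_catr.
Qed.
Lemma nth_R j : nth 0 s (p + m + 4 + j) = nth 0 R j /\ nth 0 t (p + m + 4 + j) = nth 0 R j.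
Proof. by rewrite s_eq t_eq -size_S1 nth_catr size_S1 -size_T1 nth_catr. Qed.
Lemma nth_st_le i : i <= p -> nth 0 s i = nth 0 t i.
Proof.
rewrite leq_eqVlt => /orP[/eqP ->|]; first by rewrite nth_s_p nth_t_p.
exact: nth_lt_p.
Qed.
Lemma nth0_st : nth 0 s 0 = nth 0 t 0.
Proof. exact: nth_st_le. Qed.

Lemma take_s : take p s = P. Proof. by rewrite take_size_cat. Qed.
Lemma take_t : take p t = P. Proof. by rewrite take_size_cat. Qed.
Lemma drop_s1 : drop p.+1 s = w :: W' ++ v :: u :: R.
Proof. by rewrite /s /p -addn1 drop_catr. Qed.
Lemma drop_t2 : drop p.+2 t = w :: W' ++ u :: R.
Proof. by rewrite /t /p -addn2 drop_catr. Qed.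
Lemma drop_sR : drop (p + m + 4) s = R.
Proof. by rewrite s_eq -size_S1 drop_size_cat. Qed.
Lemma drop_tR : drop (p + m + 4) t = R.
Proof. by rewrite t_eq -size_T1 drop_size_cat. Qed.

Lemma memL i : i \in L -> i < p.
Proof. by rewrite /L /Lk mem_filter mem_iota => /andP[_ /andP[_]]. Qed.

Lemma size_L : size L <= p.
Proof. by rewrite /L /Lk size_filter (leq_trans (count_size _ _)) // size_iota. Qed.

Lemma rmin_R : rmin R <= size R.
Proof. by rewrite /rmin /rminpos size_filter (leq_trans (count_size _ _)) // size_iota. Qed.

Lemma rmin_s : rmin s = size L + 2 + rmin R.
Proof. by rewrite /rmin rmp_s size_cat /= /X size_map; lia. Qed.
Lemma rmin_t : rmin t = rmin s.
Proof. by rewrite rmin_s /rmin rmp_t size_cat /= /X size_map; lia. Qed.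
Lemma rmin_lt : rmin s < size s.
Proof. rewrite rmin_s size_s; have := size_L; have := rmin_R; rewrite /p; lia. Qed.

Let l := size L.

Lemma Prm_s_l : Prm s l = p + m + 2.
Proof. by rewrite /Prm rmp_s /l nth_catr0. Qed.
Lemma Prm_s_l1 : Prm s l.+1 = p + m + 3.
Proof. by rewrite /Prm rmp_s /l nth_catr1. Qed.
Lemma Prm_t_l : Prm t l = p.
Proof. by rewrite /Prm rmp_t /l nth_catr0. Qed.
Lemma Prm_t_l1 : Prm t l.+1 = p + m + 3.
Proof. by rewrite /Prm rmp_t /l nth_catr1. Qed.
Lemma Prm_s_lt j : j < l -> Prm s j < p.
Proof. by move=> h; rewrite /Prm rmp_s nth_catl //; apply: memL; rewrite mem_nth. Qed.

Lemma Prm_big j : l.+1 < j -> j < rmin s ->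
  Prm s j = Prm t j /\ exists2 i, i < size R & Prm s j = p + m + 4 + i.
Proof.
move=> h1 h2.
have e : j = l + (j - l - 2).+2 by lia.
rewrite /Prm rmp_s rmp_t e !nth_catr /=; split => //.
have hj : j - l - 2 < rmin R by move: h2; rewrite rmin_s; lia.
exists (nth 0 (rminpos R) (j - l - 2)); last by rewrite /X (nth_map 0).
by move: (mem_nth 0 hj); rewrite rminpos_mem => /andP[].
Qed.

Lemma Prm_big1 j : l.+1 <= j -> j < rmin s ->
  Prm s j = Prm t j /\ p + m + 3 <= Prm s j.
Proof.
rewrite leq_eqVlt => /orP[/eqP <-|h1] h2.
  by rewrite Prm_s_l1 Prm_t_l1.
have [e [i _ ei]] := Prm_big h1 h2; rewrite -e ei; split => //; lia.
Qed.

Lemma Rmin_big j : l.+1 < j -> j < rmin s -> Rmin s j = Rmin t j.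
Proof.
move=> h1 h2; have [e [i hi ei]] := Prm_big h1 h2.
by rewrite /Rmin -e ei; have [-> ->] := nth_R i.
Qed.

Lemma c1 : rpos_cond s l.
Proof.
rewrite /rpos_cond /Rmin Prm_s_l nth_s_v2 occ_s_v count_cat /=.
have hA : (l == 0) || (Prm s l.-1 < p).
  case E: (l == 0) => //=; apply: Prm_s_lt; move/negbT: E; rewrite -lt0n; case: (l) => //.
have hB : (l == 0) || (Prm s l.-1 < p + m + 2).
  by case/orP: hA => [-> //|h]; apply/orP; right; apply: leq_trans h _; rewrite -addnA leq_addr.
by rewrite hA hB addn2.
Qed.
Lemma c2 : rpos_cond t l.+1.
Proof.
rewrite /rpos_cond /Rmin Prm_t_l1 nth_t_u occ_t_u count_cat /= Prm_t_l ltnSn.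
rewrite (_ : p < p + m + 3); last lia.
by rewrite addn2.
Qed.

Lemma c3 : ~~ rpos_cond s l.+1.
Proof.
rewrite /rpos_cond /Rmin Prm_s_l1 nth_s_u occ_s_u count_cat /= Prm_s_l.
rewrite (_ : (p + m + 2 < p + m + 3) = true); last by apply/idP; lia.
rewrite (@eq_in_count _ _ pred0) ?count_pred0 //.
move=> i; rewrite mem_filter mem_iota => /and3P[_ _ h] /=; apply/negbTE; rewrite -leqNgt; lia.
Qed.

Lemma c4 j : l.+1 < j -> j < rmin s -> rpos_cond s j = rpos_cond t j.
Proof.
move=> h1 h2; rewrite /rpos_cond -Rmin_big //.
have [e hge] := Prm_big1 (j := j.-1) ltac:(lia) ltac:(lia).
rewrite -e (_ : (j == 0) = false); last by apply/eqP; lia.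
move: hge; set c := Prm s j.-1 => hge.
rewrite /= !occE.
have hc : size S1 <= c.+1 by rewrite size_S1; lia.
have hc' : size T1 <= c.+1 by rewrite size_T1; lia.
have h1' := @cnt_cat (Qo (Rmin s j)) S1 R c hc.
have h2' := @cnt_cat (Qo (Rmin s j)) T1 R c hc'.
rewrite -s_eq in h1'; rewrite -t_eq in h2'.
by rewrite h1' h2' size_S1 size_T1.
Qed.

Definition tailP := forall j, l.+1 < j < rmin s -> ~~ rpos_cond s j.

Lemma rpos_s_iff : rpos s = l <-> tailP.
Proof.
have hne : rmin s != size s by rewrite neq_ltn rmin_lt.
split.
  move=> e j /andP[h1 h2]; apply: (rpos_last hne e); lia.
move=> h; apply: rpos_eq => //; first by rewrite rmin_s; lia.
  exact: c1.
move=> j /andP[h1 h2]; case: (j =P l.+1) => [->|hj]; first exact: c3.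
by apply: h; rewrite h2; lia.
Qed.

Lemma rpos_t_iff : rpos t = l.+1 <-> tailP.
Proof.
have hne : rmin t != size t by rewrite rmin_t size_t -size_s neq_ltn rmin_lt.
split.
  move=> e j /andP[h1 h2]; rewrite c4 //; apply: (rpos_last hne e); rewrite rmin_t; lia.
move=> h; apply: rpos_eq => //; first by rewrite rmin_t rmin_s; lia.
  exact: c2.
move=> j /andP[h1 h2]; rewrite rmin_t in h2; rewrite -c4 //; apply: h; lia.
Qed.

Let a := asc (0 :: P).
Let lp := last 0 P.
Let a1 := a + (lp < v).
Let B := a1.+1 + asc (w :: W').

Lemma okf_s_E : okf 0 0 s = okf 0 0 P &&
  [&& v <= a.+1, w <= a1.+1, okf a1.+1 w W', v <= B.+1, u <= B.+1 & okf B.+1 u R].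
Proof.
have vw : (v < w) = true by apply: ltn_trans Huw.
have lwv : (last w W' < v) = false by apply/negbTE; rewrite -leqNgt; apply: ltnW; apply: ltn_trans lastW.
rewrite /s okf_cat add0n -/a -/lp !okf_cons vw addn1 -/a1 okf_cat !okf_cons lwv addn0 Hvu addn1 -/B.
done.
Qed.

Lemma okf_t_E : okf 0 0 t = okf 0 0 P &&
  [&& v <= a.+1, u <= a1.+1, w <= a1.+2, okf a1.+2 w W', u <= B.+2 & okf B.+1 u R].
Proof.
have uw : (u < w) = true by apply: Huw.
have lwu : (last w W' < u) = false by apply/negbTE; rewrite -leqNgt; apply: ltnW; apply: lastW.
rewrite /t okf_cat add0n -/a -/lp !okf_cons Hvu addn1 -/a1 uw addn1 okf_cat !okf_cons lwu addn0.
rewrite (_ : a1.+2 + asc (w :: W') = B.+1) //; by rewrite /B addSn.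
Qed.
Definition nomasc := ~~ has (masc t) (iota p.+2 m.+1).

Lemma nth0_Pv (Z Z' : seq nat) : nth 0 (P ++ v :: Z) 0 = nth 0 (P ++ v :: Z') 0.
Proof. by case: (P). Qed.

Lemma nomascE : nth 0 t 0 = 0 -> nomasc = nmf a1.+1 u (w :: W').
Proof.
move=> h0; rewrite /nomasc -all_predC (iota_add p.+2) all_map nmfE.
apply: eq_in_all => j; rewrite mem_iota => /andP[_ hj].
have hj' : j < size (w :: W') by move: hj; rewrite /m /=; lia.
rewrite (_ : preim _ _ j = ~~ masc t (p.+2 + j)) //.
rewrite /masc (_ : p.+2 + j = size P + j.+2); last by rewrite /p; lia.
rewrite /t nth_catr take_catr.
have e1 : nth 0 [:: v, u, w & W' ++ u :: R] j.+2 = nth 0 (w :: W') j.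
  by rewrite /= -cat_cons nth_cat hj'.
have e2 : take j.+2 [:: v, u, w & W' ++ u :: R] = [:: v, u & take j (w :: W')].
  by rewrite /= -cat_cons take_cat hj'.
rewrite e1 e2.
rewrite -asc0; last by rewrite (nth0_Pv _ (u :: w :: W' ++ u :: R)); exact: h0.
rewrite asc_cat -/a -/lp !asc_cons2 Hvu.
set q := asc (u :: take j (w :: W')).
congr (_ != _); rewrite /a1 /=; lia.
Qed.
Lemma s_nil : s != [::]. Proof. by rewrite /s; case: (P). Qed.
Lemma t_nil : t != [::]. Proof. by rewrite /t; case: (P). Qed.

Lemma asc_s_t : is_ascent s -> is_ascent t && nomasc.
Proof.
move=> hs.
have h0 : nth 0 t 0 = 0 by rewrite -nth0_st; case/and3P: hs => _ /eqP.
rewrite nomascE // ascE t_nil h0 eqxx okf_t_E /=.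
move: hs; rewrite ascE okf_s_E => /and3P[_ _ /andP[hP /and3P[h1 h2 /and4P[h3 h4 h5 h6]]]].
have uw : (u < w) = true by apply: Huw.
rewrite hP h1 h6 /= uw addn1 (okf_nmf h3) andbT.
have hB : a1 <= B by rewrite /B; lia.
rewrite (okf_mono (a' := a1.+2) _ h3) //.
have -> : (w != a1.+2) by apply/eqP; lia.
have -> : u <= a1.+1 by lia.
have -> : w <= a1.+2 by lia.
have -> : u <= B.+2 by lia.
done.
Qed.

Lemma asc_t_s : is_ascent t -> nomasc -> is_ascent s.
Proof.
move=> ht.
have h0 : nth 0 t 0 = 0 by case/and3P: ht => _ /eqP.
rewrite nomascE // /= => /andP[hw hn].
have uw : (u < w) = true by apply: Huw.
rewrite uw addn1 in hn.
rewrite ascE s_nil nth0_st h0 eqxx okf_s_E /=.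
move: ht; rewrite ascE okf_t_E => /and3P[_ _ /andP[hP /and3P[h1 h2 /and4P[h3 h4 h5 h6]]]].
rewrite hP h1 h6 /= (okf_shift h4 hn) andbT.
have hB : a1 <= B by rewrite /B; lia.
have ha : a <= a1 by rewrite /a1; lia.
apply/and4P; split; lia.
Qed.

Lemma asc_core : asc (v :: w :: W' ++ v :: u :: R) = asc (v :: u :: w :: W' ++ u :: R).
Proof.
have vw : (v < w) = true by apply: ltn_trans Huw.
have lwv : (last w W' < v) = false by apply/negbTE; rewrite -leqNgt; apply: ltnW; apply: ltn_trans lastW.
have lwu : (last w W' < u) = false by apply/negbTE; rewrite -leqNgt; apply: ltnW; apply: lastW.
have uw : (u < w) = true by apply: Huw.
rewrite !asc_cons2 -!cat_cons !asc_cat !asc_cons2 vw lwv lwu uw Hvu /=.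
lia.
Qed.

Lemma asc_st : asc s = asc t.
Proof.
rewrite /s /t; case: (P) => [|y P']; first exact: asc_core.
rewrite !cat_cons !asc_cat; congr (_ + _).
by rewrite (asc_cons2 _ v (w :: _)) (asc_cons2 _ v (u :: _)) asc_core.
Qed.

Lemma mem_st z : (z \in s) = (z \in t).
Proof.
rewrite /s /t !mem_cat !inE !mem_cat !inE.
by case: (z \in P); case: (z == v); case: (z == u); case: (z == w); case: (z \in W'); case: (z \in R).
Qed.

Lemma rep_st : rep s = rep t.
Proof.
rewrite /rep size_s size_t; congr (_ - _).
by apply: perm_size; apply: perm_undup => z; rewrite mem_st.
Qed.

Lemma zero_st : zero s = zero t + (v == 0).
Proof.
have hu : (u == 0) = false by apply/negbTE; rewrite -lt0n; apply: leq_ltn_trans Hvu.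
rewrite /zero /s /t !count_cat /= !count_cat /= hu.
lia.
Qed.

Lemma v0 : is_ascent s -> (v == 0) = (l == 0).
Proof.
move=> hs.
case: (v =P 0) => hv0.
  apply/esym/eqP; rewrite /l.
  case E: L => [|i L'] //.
  have : i \in L by rewrite E mem_head.
  rewrite /L /Lk mem_filter /Qr all_cat /= => /andP[/and4P[_ h _ _] _].
  by rewrite hv0 in h.
symmetry; apply/negbTE.
have hsz : 0 < size s by rewrite size_s; lia.
have [j [_ hj hle]] := EXR hsz.
case/and3P: hs => _ /eqP h0 _; rewrite h0 leqn0 in hle.
move: hj; rewrite rmp_s mem_cat => /orP[hjL|].
  by rewrite /l; case: (L) hjL.
rewrite !inE => /orP[/eqP e|/orP[/eqP e|hX]].
- by move: hle; rewrite e nth_s_v2; move/eqP.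
- by move: hle; rewrite e nth_s_u => /eqP hu; move: Hvu; rewrite hu.
- move: hX; rewrite /X => /mapP[i hi e].
  have hiR : i < size R by move: hi; rewrite rminpos_mem => /andP[].
  have [e1 _] := nth_R i; move: hle; rewrite e e1 => /eqP hr.
  have := all_nthP 0 HR i hiR; rewrite hr ltn0 //.
Qed.

Lemma v_ne_p : is_ascent s -> v != p.
Proof.
move=> hs; apply/eqP => e.
have := asc_le_i p.+1 hs.
rewrite -[p.+1]addn0 -nth_drop drop_s1 /=.
have := Hvu; have := Huw; rewrite e; lia.
Qed.

Lemma nofix x : is_ascent x -> nth 0 x p = v -> is_ascent s -> forall i, p <= i -> nth 0 x i != i.
Proof.
move=> hx hp hs i hi; apply/eqP => e.
have := run hx e hi; rewrite hp => ev.
by move: (v_ne_p hs); rewrite ev eqxx.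
Qed.

Lemma maxst_st : is_ascent s -> is_ascent t -> maxst s = maxst t /\ ealm s = ealm t.
Proof.
move=> hs ht.
have hs' := nofix hs nth_s_p hs.
have ht' := nofix ht nth_t_p hs.
have hps : p <= size s by rewrite size_s; lia.
have hpt : p <= size t by rewrite size_t; lia.
have e : count (fun i => nth 0 s i == i) (iota 0 p) = count (fun i => nth 0 t i == i) (iota 0 p).
  by apply: eq_in_count => i; rewrite mem_iota => /andP[_ hi]; rewrite nth_lt_p.
have em : maxst s = maxst t by rewrite (maxst_cut hps hs') (maxst_cut hpt ht') e.
split => //.
rewrite /ealm -em size_s -size_t; case: ifP => // _.
apply: nth_st_le; rewrite (maxst_cut hps hs').
by apply: leq_trans (count_size _ _) _; rewrite size_iota.
Qed.

Lemma key_f : tailP -> f51 s = t.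
Proof.
move=> /rpos_s_iff hr.
rewrite /f51 hr Prm_s_l nth_s_v2.
have -> : rocc2 s v = p by rewrite /rocc2 occ_s_v rev_cat.
rewrite (_ : (p + m + 2).+1 = p + m + 3) ?nth_s_u; last lia.
rewrite take_s drop_s1 (_ : (p + m + 3).+1 = p + m + 4) ?drop_sR; last lia.
rewrite (_ : p + m + 2 - p.+1 = (size W').+1); last by rewrite /m; lia.
by rewrite (_ : w :: W' ++ v :: u :: R = (w :: W') ++ v :: u :: R) // take_size_cat.
Qed.

Lemma key_g : tailP -> g51 t = s.
Proof.
move=> /rpos_t_iff hr.
rewrite /g51 hr Prm_t_l1 /= Prm_t_l nth_t_p nth_t_u.
rewrite take_t drop_t2 (_ : (p + m + 3).+1 = p + m + 4) ?drop_tR; last lia.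
rewrite (_ : p + m + 3 - p.+2 = (size W').+1); last by rewrite /m; lia.
by rewrite (_ : w :: W' ++ u :: R = (w :: W') ++ u :: R) // take_size_cat.
Qed.

Lemma sebr_s : tailP -> sebr s = foldr minn w W'.
Proof.
move=> /rpos_s_iff hr.
rewrite /sebr hr /Rmin Prm_s_l nth_s_v2 /rocc1 /rocc2 occ_s_v size_cat rev_cat /=.
rewrite (_ : (size _ + 2 < 2) = false); last by apply/negbTE; rewrite -leqNgt leq_addl.
rewrite map_nth_iota; last by rewrite size_s; lia.
rewrite drop_s1 (_ : p + m + 2 - p.+1 = (size W').+1); last by rewrite /m; lia.
by rewrite (_ : w :: W' ++ v :: u :: R = (w :: W') ++ v :: u :: R) // take_size_cat.
Qed.

Lemma key_T51 : is_ascent s -> tailP -> in_T51 s.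
Proof.
move=> hs ht; have hr := (proj2 rpos_s_iff) ht.
have hse := sebr_s ht.
have hgt : u < foldr minn w W' by rewrite foldr_minn_gt allWu.
rewrite /in_T51 /in_Astar hs /= hse hr Prm_s_l1 Prm_s_l /Rmin Prm_s_l1 nth_s_u hgt andbT.
apply/and4P; split.
- apply/eqP => e; have := iota_uniq 0 (size s); rewrite -e /s cat_uniq.
  move=> /and3P[_ _ /andP[hn _]]; apply: (negP hn).
  by rewrite inE mem_cat inE eqxx !orbT.
- rewrite rmin_s size_s; have := size_L; have := rmin_R; rewrite /p /l; lia.
- by rewrite -lt0n; apply: leq_ltn_trans hgt.
- apply/andP; split; first by rewrite rmin_s /l; lia.
  by apply/eqP; lia.
Qed.

Lemma key_target n : is_ascent t -> nomasc -> tailP -> size t = n -> in_target n t.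
Proof.
move=> ht hn htl hsz; have hr := (proj2 rpos_t_iff) htl.
rewrite /in_target /in_A ht hsz eqxx hr /= /Rmin Prm_t_l1 nth_t_u Prm_t_l.
rewrite /rocc1 /rocc2 occ_t_u rev_cat /=.
rewrite /adjacent eqxx /=.
rewrite (_ : p + m + 3 - p.+2 = m.+1); last lia.
rewrite -/nomasc hn andbT.
by apply/norP; split; apply/eqP; lia.
Qed.

Lemma nomasc_of : tailP ->
  ~~ has (masc t) (iota (rocc2 t (Rmin t (rpos t))).+1
        (rocc1 t (Rmin t (rpos t)) - (rocc2 t (Rmin t (rpos t))).+1)) -> nomasc.
Proof.
move=> htl; have hr := (proj2 rpos_t_iff) htl.
rewrite hr /Rmin Prm_t_l1 nth_t_u /rocc1 /rocc2 occ_t_u rev_cat /=.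
by rewrite (_ : p + m + 3 - p.+2 = m.+1); last lia.
Qed.
End Key.


Lemma ext_T51 s : in_T51 s -> exists P W' R v u w,
  [/\ v < u, u < w, all (fun z => u < z) W', all (fun z => u < z) R
    & s = P ++ v :: w :: W' ++ v :: u :: R]
  /\ Prm s (rpos s) = size P + size W' + 2.
Proof.
case/and5P => _ _ hsebr /andP[hr hlt] /eqP hprm.
move: hsebr hlt; rewrite /sebr /Rmin hprm.
have [hq hq'] := Prm_rmin (ltnW hr).
have [hq1 hq1'] := Prm_rmin hr.
rewrite /Rmin hprm in hq' hq1 hq1'.
set r := rpos s in hr hprm hq hq' hq1 hq1' *.
set q := Prm s r in hprm hq hq' hq1 hq1' *.
set v := nth 0 s q in hq' *.
set u := nth 0 s q.+1 in hq1' *.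
have hd1 : drop q.+1 s = u :: drop q.+2 s by rewrite (drop_nth 0 hq1).
have huv : v < u by move: hq'; rewrite hd1 /= => /andP[].
rewrite /rocc1 /rocc2 (occ_rmin hq hq') rev_rcons size_rcons /=.
set O := filter _ (iota 0 q).
case EO: O => [|o O'] //=.
have ea : nth 0 (rev (o :: O')) 0 = last o O'.
  by rewrite nth_rev //= subn1 /=; have := nth_last 0 (o :: O').
rewrite ea.
set a := last o O'.
have : a \in O by rewrite EO; exact: mem_last.
rewrite mem_filter mem_iota => /andP[/eqP hav /andP[_ haq]].
rewrite map_nth_iota; last lia.
case EW: (take (q - a.+1) (drop a.+1 s)) => [|w W'] //.
move=> _; rewrite foldr_minn_gt /= => /andP[huw hW].
have hsz : size (take (q - a.+1) (drop a.+1 s)) = q - a.+1.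
  by rewrite size_takel // size_drop; lia.
rewrite EW /= in hsz.
exists (take a s), W', (drop q.+2 s), v, u, w.
have e1 : drop a.+1 s = (w :: W') ++ drop q s.
  by rewrite -EW -{1}(cat_take_drop (q - a.+1) (drop a.+1 s)) drop_drop subnK.
have e2 : drop q s = v :: u :: drop q.+2 s by rewrite (drop_nth 0 hq) hd1.
split; first split => //.
  by rewrite -{1}(cat_take_drop a s) (drop_nth 0 (ltn_trans haq hq)) hav e1 e2.
rewrite size_takel; first lia.
by apply: ltnW; apply: ltn_trans hq.
Qed.

Lemma all_drop_nth x q y j : all (fun z => y < z) (drop q.+1 x) -> q < j -> j < size x ->
  y < nth 0 x j.
Proof.
move=> /(all_nthP 0) h hqj hj.
have := h (j - q.+1); rewrite size_drop nth_drop (_ : q.+1 + (j - q.+1) = j); last lia.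
by apply; lia.
Qed.

Lemma Prm_le x i j : i <= j -> j < rmin x -> Prm x i <= Prm x j.
Proof.
rewrite leq_eqVlt => /orP[/eqP -> //|h] hj.
by apply: ltnW; apply: Prm_lt.
Qed.

Lemma ext_target n t : in_target n t -> exists P W' R v u w,
  [/\ v < u, u < w, all (fun z => u < z) W', all (fun z => u < z) R
    & t = P ++ v :: u :: w :: W' ++ u :: R]
  /\ Prm t (rpos t).-1 = size P /\ rpos t != 0.
Proof.
case/and5P => hA hr0 hadj hnadj _.
have [hne hr hc] := rpos_nz hr0.
move: hadj hnadj hc; rewrite /rpos_cond /Rmin.
set r := rpos t in hr0 hr *.
have hr1 : r.-1 < r by case: (r) hr0.
have hab := Prm_lt hr1 hr.
have [hb hb'] := Prm_rmin hr.
have [ha ha'] := Prm_rmin (ltn_trans hr1 hr).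
rewrite /Rmin in hb' ha'.
set b := Prm t r in hab hb hb' *.
set a := Prm t r.-1 in hab ha ha' *.
set u := nth 0 t b in hb' *.
set v := nth 0 t a in ha' *.
rewrite /rocc1 /rocc2 (occ_rmin hb hb') rev_rcons (negbTE hr0) /=.
set O := filter _ (iota 0 b).
move=> hadj hnadj hc.
have : 0 < count (fun i => a < i) O.
  move: hc; rewrite -cats1 count_cat /=; lia.
rewrite -has_count => /hasP [i hiO hai].
move: (hiO); rewrite mem_filter mem_iota => /andP[/eqP hiu /andP[_ hib]].
case EO: O hiO => [|o O'] // _.
rewrite EO in hadj hnadj.
have ea : nth 0 (rev (o :: O')) 0 = last o O'.
  by rewrite nth_rev //= subn1 /=; have := nth_last 0 (o :: O').
rewrite ea in hadj hnadj.
set c := last o O' in hadj hnadj.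
have : c \in O by rewrite EO; exact: mem_last.
rewrite mem_filter mem_iota => /andP[/eqP hcu /andP[_ hcb]].
have hic : i <= c.
  have := @last_filter_ge (fun j => nth 0 t j == u) b i hib (introT eqP hiu).
  by rewrite -/O EO.
have hca : c = a.+1 by move: hadj; rewrite /adjacent => /orP[/eqP|/eqP]; lia.
have hcb' : c.+1 != b by move: hnadj; rewrite /adjacent negb_or => /andP[].
have hnou : forall j, c < j < b -> nth 0 t j != u.
  move=> j /andP[h1 h2]; apply/negP => /eqP hj.
  have := @last_filter_ge (fun j => nth 0 t j == u) b j h2 (introT eqP hj).
  rewrite -/O EO /= -/c; lia.
have hWu : forall j, a.+1 < j < b -> u < nth 0 t j.
  move=> j /andP[h1 h2].
  have hj : j < size t by apply: ltn_trans hb.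
  rewrite ltn_neqAle eq_sym hnou /=; last by rewrite hca h1 h2.
  rewrite leqNgt; apply/negP => hlt.
  have [j' [hjj' hj'm hle]] := EXR hj.
  have hk : index j' (rminpos t) < rmin t by rewrite /rmin index_mem.
  have ej : Prm t (index j' (rminpos t)) = j' by rewrite /Prm nth_index.
  case: (ltngtP (index j' (rminpos t)) r) => hkr.
  - have := Prm_le (x := t) (i := index j' (rminpos t)) (j := r.-1) ltac:(lia) (ltn_trans hr1 hr).
    rewrite ej -/a; lia.
  - have := Prm_lt hkr hk; rewrite ej -/b => hbj.
    have hj's : j' < size t by have := hj'm; rewrite rminpos_mem => /andP[].
    have := all_drop_nth hb' hbj hj's; lia.
  - move: hle; rewrite -ej hkr -/b -/u; lia.
have hvu : v < u by apply: all_drop_nth ha' hab hb.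
have hsz : size (take (b - a.+2) (drop a.+2 t)) = b - a.+2.
  by rewrite size_takel // size_drop; lia.
case EW: (take (b - a.+2) (drop a.+2 t)) hsz => [|w W'] hsz /=; first by move: hsz => /= ; lia.
have hall : all (fun z => u < z) (w :: W').
  rewrite -EW; apply/(all_nthP 0) => k hk.
  rewrite size_takel in hk; last by rewrite size_drop; lia.
  rewrite nth_take // nth_drop; apply: hWu; lia.
move: hall => /= /andP[huw hW].
exists (take a t), W', (drop b.+1 t), v, u, w.
have e1 : drop a.+2 t = (w :: W') ++ drop b t.
  by rewrite -EW -{1}(cat_take_drop (b - a.+2) (drop a.+2 t)) drop_drop subnK //; lia.
have e2 : drop b t = u :: drop b.+1 t by rewrite (drop_nth 0 hb).
have ha1 : a.+1 < size t by rewrite -hca; apply: ltn_trans hb; lia.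
have e3 : drop a.+1 t = u :: drop a.+2 t by rewrite (drop_nth 0 ha1) -hca hcu.
split; first split => //.
  by rewrite -{1}(cat_take_drop a t) (drop_nth 0 ha) e3 e1 e2.
split => //.
rewrite size_takel //; exact: ltnW.
Qed.

Lemma T51_dec s : in_T51 s -> exists P W' R v u w,
  [/\ v < u, u < w, all (fun z => u < z) W', all (fun z => u < z) R
   & s = P ++ v :: w :: W' ++ v :: u :: R] /\ tailP P W' R v u w.
Proof.
move=> hT; have [P [W' [R [v [u [w [[hvu huw hW hR es] hprm]]]]]]] := ext_T51 hT.
exists P, W', R, v, u, w; split => //.
subst s.
apply/(rpos_s_iff _ hvu huw hW hR).
have hr : (rpos (P ++ v :: w :: W' ++ v :: u :: R)).+1 < rmin (P ++ v :: w :: W' ++ v :: u :: R).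
  by case/and5P: hT => _ _ _ /andP[].
apply: (Prm_inj (x := P ++ v :: w :: W' ++ v :: u :: R)); first lia.
  by rewrite (rmin_s _ hvu huw hW hR); lia.
by rewrite hprm (Prm_s_l _ hvu huw hW hR).
Qed.

Lemma gf s : in_T51 s -> g51 (f51 s) = s.
Proof.
move=> hT; have [P [W' [R [v [u [w [[hvu huw hW hR es] htl]]]]]]] := T51_dec hT.
by subst s; rewrite (key_f hvu huw hW hR htl) (key_g hvu huw hW hR htl).
Qed.

Unset Implicit Arguments.

Theorem mainTheorem13 (n : nat) :
  exists f : seq nat -> seq nat,
    [/\ (forall s, in_T51 s -> in_A n s -> in_target n (f s)),
        {in [pred s | in_T51 s && in_A n s] &, injective f},
        (forall t, in_target n t -> exists2 s, in_T51 s && in_A n s & f s = t) &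
        (forall s, in_T51 s -> in_A n s ->
           [/\ asc (f s) = asc s, rep (f s) = rep s, maxst (f s) = maxst s,
               ealm (f s) = ealm s & rmin (f s) = rmin s] /\
           rpos s = rpos (f s) - 1 /\
           zero s = zero (f s) + (rpos s == 0))].
Proof.
exists f51; split.
- move=> s hT /andP[hA hn].
  have [P [W' [R [v [u [w [[hvu huw hW hR es] htl]]]]]]] := T51_dec hT.
  subst s; rewrite (key_f hvu huw hW hR htl).
  have /andP[ht hm] := asc_s_t hvu huw hW hR hA.
  apply: (key_target hvu huw hW hR ht hm htl).
  by rewrite (size_t _ hvu huw hW hR) -(size_s _ hvu huw hW hR); apply/eqP.
- move=> s1 s2; rewrite !inE => /andP[h1 _] /andP[h2 _] e.
  by rewrite -(gf h1) -(gf h2) e.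
- move=> t ht.
  have [P [W' [R [v [u [w [[hvu huw hW hR et] [hprm hr0]]]]]]]] := ext_target ht.
  subst t.
  have hr := rpos_nz hr0; case: hr => hne hrr _.
  have e1 : (rpos (P ++ [:: v, u, w & W' ++ u :: R])).-1 = size (Lk P W' R v u w).
    apply: (Prm_inj (x := P ++ [:: v, u, w & W' ++ u :: R])); first lia.
      by rewrite (rmin_t _ hvu huw hW hR) (rmin_s _ hvu huw hW hR); lia.
    by rewrite hprm (Prm_t_l _ hvu huw hW hR).
  have htl : tailP P W' R v u w.
    apply/(rpos_t_iff _ hvu huw hW hR); lia.
  case/and5P: (ht) => /andP[hta hn] _ _ _ hnm.
  have hm := nomasc_of hvu huw hW hR htl hnm.
  have hsa := asc_t_s hvu huw hW hR hta hm.
  exists (P ++ v :: w :: W' ++ v :: u :: R); last exact: (key_f hvu huw hW hR htl).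
  rewrite (key_T51 hvu huw hW hR hsa htl) /in_A hsa /=.
  by rewrite (size_s _ hvu huw hW hR) -(size_t _ hvu huw hW hR).
- move=> s hT /andP[hA hn].
  have [P [W' [R [v [u [w [[hvu huw hW hR es] htl]]]]]]] := T51_dec hT.
  subst s; rewrite (key_f hvu huw hW hR htl).
  have /andP[ht hm] := asc_s_t hvu huw hW hR hA.
  have [hmx hea] := maxst_st hvu huw hW hR hA ht.
  have hrs := (proj2 (rpos_s_iff _ hvu huw hW hR)) htl.
  have hrt := (proj2 (rpos_t_iff _ hvu huw hW hR)) htl.
  split; first split.
  + by rewrite (asc_st _ hvu huw hW hR).
  + by rewrite (rep_st _ hvu huw hW hR).
  + by rewrite hmx.
  + by rewrite hea.
  + by rewrite (rmin_t _ hvu huw hW hR).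
  split; first by rewrite hrs hrt subn1.
  by rewrite (zero_st _ hvu huw hW hR) hrs (v0 hvu huw hW hR hA).
Qed.
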